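(* Let $T=T(n,a,b)$ with $a\ge 0$, $b\ge a+2$ and $2(a+b)<n-1$, let $\ell=n-a-b$ and $x=x(T)$. Suppose $b<\frac{\ell}{2}$. Then (i) if $a\ge1$, then for $i=1,\dots,a$: $x_{v_i}-x_{v_{\ell+1-i}}<x_{v_{i+1}}-x_{v_{\ell-i}}$ and $x_{w_i}-x_{w_{\ell-i}}<x_{v_{i+1}}-x_{v_{\ell-i}}$; (ii) $x_{v_{a+1+i}}-x_{v_{\ell-b+1-i}}>x_{v_{a+2+i}}-x_{v_{\ell-b-i}}>0$ for $i=1,\dots,\lfloor\frac{\ell-b-a-1}{2}\rfloor-1$; (iii) $x_{v_{\ell-b+1}}<x_{v_{\ell-a}}$.
   Context: Hypergraphs have edges that are vertex subsets of size at least two; distance $d_T(u,v)$ in a hypertree is the length of a shortest loose path (an alternating sequence of distinct vertices and distinct edges $(v_0,e_1,v_1,\dots,e_p,v_p)$ with $v_{i-1},v_i\in e_i$ and non-consecutive edges disjoint). $D(T)$ is the distance matrix, $\rho(T)$ its largest eigenvalue, and $x(T)$ the unit positive eigenvector for $\rho(T)$ (distance Perron vector), with entries $x_v$ indexed by vertices. For integers $n,a,b$ with $0\le a\le b$ and $a+b\le\lfloor\frac{n-1}{2}\rfloor$, put $\ell=n-a-b$ and $I=\{1,\dots,a\}\cup\{\ell-b,\dots,\ell-1\}$; $T(n,a,b)$ is the hypertree with vertex set $\{v_1,\dots,v_\ell\}\cup\{w_i:i\in I\}$ and edges $\{v_i,w_i,v_{i+1}\}$ for $i\in I$ and $\{v_i,v_{i+1}\}$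 for $i\in\{1,\dots,\ell-1\}\setminus I$. *)

(* Defs.v *)
From HB Require Import structures.
From mathcomp Require Import all_boot all_order all_algebra.
From mathcomp Require Import reals.
Set Implicit Arguments. Unset Strict Implicit. Unset Printing Implicit Defensive.
Import Order.TTheory GRing.Theory Num.Theory.

(* A hypergraph is given by a vertex set [VS : {set V}] and a list of edges
   [E : seq {set V}] (each edge a subset of VS of size >= 2). *)

Section Hyper.
Variable V : finType.

(* [lpath E u vs es]: (u = v_0, e_1, v_1, ..., e_p, v_p) with
   vs = [v_1; ...; v_p] and es = [e_1; ...; e_p] is a loose path:
   distinct vertices, distinct edges taken from E, v_{i-1}, v_i in e_i,
   non-consecutive edges disjoint. *)
Definition lpath (E : seq {set V}) (u : V) (vs : seq V) (es : seq {set V}) : Prop :=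
  [/\ size vs = size es,
      uniq (u :: vs),
      uniq es && all (fun e => e \in E) es,
      (forall i, i < size es ->
         nth u (u :: vs) i \in nth set0 es i /\ nth u (u :: vs) i.+1 \in nth set0 es i)
    & (forall i j, i.+1 < j -> j < size es ->
         [disjoint nth set0 es i & nth set0 es j])].

Definition distance_matrix (VS : {set V}) (E : seq {set V}) (D : V -> V -> nat) : Prop :=
  forall u v, u \in VS -> v \in VS ->
    (exists vs es, [/\ lpath E u vs es, last u vs = v & size es = D u v]) /\
    (forall vs es, lpath E u vs es -> last u vs = v -> D u v <= size es).

Variable R : realType.
Local Open Scope ring_scope.

Definition dist_eigen (VS : {set V}) (D : V -> V -> nat) (lam : R) (y : V -> R) : Prop :=
  (exists2 u, u \in VS & y u != 0) /\
  (forall u, u \in VS -> \sum_(w in VS) (D u w)%:R * y w = lam * y u).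

Definition distance_perron_vector (VS : {set V}) (D : V -> V -> nat) (x : V -> R) : Prop :=
  exists rho : R,
    [/\ dist_eigen VS D rho x,
        (forall lam y, dist_eigen VS D lam y -> lam <= rho),
        (forall u, u \in VS -> 0 < x u)
      & \sum_(u in VS) x u ^+ 2 = 1].

End Hyper.

(* Ambient vertex type: (false, i) encodes v_i, (true, i) encodes w_i. *)
Definition Vt (n : nat) : finType := (bool * 'I_n.+1)%type.

Definition vv (n i : nat) : Vt n := (false, @inord n i).
Definition ww (n i : nat) : Vt n := (true, @inord n i).

Definition ell (n a b : nat) : nat := n - a - b.

Definition inI (n a b i : nat) : bool :=
  ((1 <= i) && (i <= a)) || ((ell n a b - b <= i) && (i <= (ell n a b).-1)).

Definition T_vertices (n a b : nat) : {set Vt n} :=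
  [set u : Vt n | (~~ u.1 && (1 <= u.2 <= ell n a b)) || (u.1 && inI n a b u.2)].

Definition T_edge (n a b i : nat) : {set Vt n} :=
  if inI n a b i then [set vv n i; ww n i; vv n i.+1] else [set vv n i; vv n i.+1].

Definition T_edges (n a b : nat) : seq {set Vt n} :=
  [seq T_edge n a b i | i <- iota 1 (ell n a b).-1].

(* Main.v *)
Require Import Defs.
From HB Require Import structures.
From mathcomp Require Import all_boot all_order all_algebra.
From mathcomp Require Import reals.
From mathcomp Require Import zify ring lra.
Import Order.TTheory GRing.Theory Num.Theory.
Local Open Scope ring_scope.

Lemma lpath_rev (V : finType) (E : seq {set V}) u vs es : lpath E u vs es ->
  lpath E (last u vs) (rev (belast u vs)) (rev es) /\
  last (last u vs) (rev (belast u vs)) = u.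
Proof.
case=> hs hu /andP[hue hall] hadj hdis.
have hW : last u vs :: rev (belast u vs) = rev (u :: vs) by rewrite [in RHS]lastI rev_rcons.
set p := size es.
have hsz : size (u :: vs) = p.+1 by rewrite /= hs.
have nthW i : (i <= p)%N -> nth (last u vs) (last u vs :: rev (belast u vs)) i = nth u (u :: vs) (p - i).
  move=> hi; rewrite hW nth_rev hsz //; rewrite (set_nth_default u); last by rewrite hsz; lia.
  by congr nth; lia.
split; last first.
  by rewrite (last_nth (last u vs)) size_rev size_belast hs nthW // subnn.
split.
- by rewrite size_rev size_belast hs size_rev.
- by rewrite hW rev_uniq.
- by rewrite rev_uniq hue all_rev.
- move=> i; rewrite size_rev => hi.
  rewrite !nthW; try lia.
  rewrite nth_rev //.
  have [h1 h2] := hadj (p - i.+1)%N ltac:(lia).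
  have -> : (p - i = (p - i.+1).+1)%N by lia.
  by split.
- move=> i j hij hj; rewrite size_rev in hj.
  rewrite !nth_rev //; last by lia.
  rewrite disjoint_sym; apply: hdis; rewrite -/p; lia.
Qed.

Section Dist.
Variables (n a b : nat).
Hypothesis Hab : (a + 2 <= b)%N.
Hypothesis Hbl : (2 * b < ell n a b)%N.
Local Notation l := (ell n a b).
Local Notation VS := (T_vertices n a b).
Local Notation E := (T_edges n a b).

Definition Pn (y : Vt n) : nat := (2 * val y.2 + y.1)%N.
Definition dn (i j : nat) : nat := ((i - j) + (j - i))%N.
Definition dst (y z : Vt n) : nat :=
  if y == z then 0%N else ((dn (Pn y) (Pn z) + y.1 + z.1)./2)%N.

Lemma l_le_n : (l <= n)%N. Proof. rewrite /ell; lia. Qed.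

Lemma val_vv i : (i <= n)%N -> val (vv n i).2 = i.
Proof. by move=> h; rewrite /= inordK // ltnS. Qed.
Lemma val_ww i : (i <= n)%N -> val (ww n i).2 = i.
Proof. by move=> h; rewrite /= inordK // ltnS. Qed.
Lemma Pn_vv i : (i <= n)%N -> Pn (vv n i) = (2 * i)%N.
Proof. by move=> h; rewrite /Pn val_vv // addn0. Qed.
Lemma Pn_ww i : (i <= n)%N -> Pn (ww n i) = (2 * i + 1)%N.
Proof. by move=> h; rewrite /Pn val_ww. Qed.

Lemma inI_bound i : inI n a b i -> (1 <= i)%N && (i < l)%N.
Proof. rewrite /inI => /orP [/andP[h1 h2]|/andP[h1 h2]]; apply/andP; split; lia. Qed.

Lemma mem_edge k y : (k < l)%N -> y \in T_edge n a b k ->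
  [\/ y = vv n k, (inI n a b k /\ y = ww n k) | y = vv n k.+1].
Proof.
move=> hk; rewrite /T_edge; case: ifP => hI; rewrite !inE.
  by case/orP=> [/orP[]|] /eqP ->; [apply: Or31|apply: Or32|apply: Or33].
by case/orP=> /eqP ->; [apply: Or31|apply: Or33].
Qed.

Lemma edge_step k y z : (k < l)%N -> y \in T_edge n a b k -> z \in T_edge n a b k ->
  y != z -> (dn (Pn y) (Pn z) + y.1 + z.1 <= 2)%N.
Proof.
move=> hk hy hz; have hkn : (k.+1 <= n)%N by have := l_le_n; lia.
have hkn' : (k <= n)%N by lia.
case/mem_edge: hy => // [->|[_ ->]|->]; case/mem_edge: hz => // [->|[_ ->]|->];
  rewrite ?eqxx // => _; rewrite ?Pn_vv ?Pn_ww //= /dn; lia.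
Qed.

Lemma mem_edges e : e \in E -> exists2 k, (1 <= k < l)%N & e = T_edge n a b k.
Proof.
case/mapP => k; rewrite mem_iota => hk ->; exists k => //.
move: hk; have := Hbl; lia.
Qed.

Lemma lpath_lb u vs es : lpath E u vs es -> u != last u vs ->
  (dn (Pn u) (Pn (last u vs)) + u.1 + (last u vs).1 <= 2 * size es)%N.
Proof.
case=> hs hu /andP[hue hall] hadj hdis hne.
pose y i := nth u (u :: vs) i.
have step i : (i < size es)%N ->
    (dn (Pn (y i)) (Pn (y i.+1)) + (y i).1 + (y i.+1).1 <= 2)%N.
  move=> hi; have [h1 h2] := hadj i hi.
  have he : nth set0 es i \in E := (allP hall) _ (mem_nth _ hi).
  case/mem_edges: he => k hk he; rewrite he in h1 h2.
  apply: (@edge_step k (y i) (y i.+1)) => //; first by lia.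
  rewrite /y nth_uniq //= ?hs; try lia.
have claim i : (1 <= i <= size es)%N ->
    (dn (Pn u) (Pn (y i)) + u.1 + (y i).1 <= 2 * i)%N.
  elim: i => // i IH /andP[_ hi].
  case: i IH hi => [|i] IH hi; first by have := step 0%N hi.
  have h1 := IH (ltnW hi); have h2 := step i.+1 hi.
  move: h1 h2; rewrite /dn.
  have := leq_b1 (y i.+1).1; have := leq_b1 (y i.+2).1; have := leq_b1 u.1.
  lia.
have hsz : (1 <= size es)%N.
  case: (posnP (size es)) => [h0|//].
  have hv : vs = [::] by apply/nilP; rewrite /nilp hs h0.
  by move: hne; rewrite hv eqxx.
have := claim (size es); rewrite hsz leqnn => /(_ isT).
by rewrite /y -hs -last_nth.
Qed.




Lemma vt_eta (y : Vt n) : y = if y.1 then ww n (val y.2) else vv n (val y.2).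
Proof. by case: y => [[] i]; rewrite /vv /ww inord_val. Qed.

Lemma vv_in_edge k : vv n k \in T_edge n a b k.
Proof. by rewrite /T_edge; case: ifP => _; rewrite !inE eqxx. Qed.
Lemma vvS_in_edge k : vv n k.+1 \in T_edge n a b k.
Proof. by rewrite /T_edge; case: ifP => _; rewrite !inE eqxx ?orbT. Qed.
Lemma ww_in_edge k : inI n a b k -> ww n k \in T_edge n a b k.
Proof. by rewrite /T_edge => ->; rewrite !inE eqxx ?orbT. Qed.

Lemma edge_Pn k y : (k < l)%N -> y \in T_edge n a b k -> (2 * k <= Pn y <= 2 * k + 2)%N.
Proof.
move=> hk hy; have hkn : (k.+1 <= n)%N by have := l_le_n; lia.
case/mem_edge: hy => // [->|[_ ->]|->]; rewrite ?Pn_vv ?Pn_ww //; lia.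
Qed.

Lemma VS_mem y : y \in VS -> if y.1 then inI n a b (val y.2) else (1 <= val y.2 <= l)%N.
Proof. by rewrite inE; case: y => [[] i] /=; rewrite ?orbF. Qed.

Lemma Pn_inj y z : Pn y = Pn z -> y = z.
Proof.
move=> h; move: h; rewrite /Pn => h.
have h1 : y.1 = z.1 by case: y.1 z.1 h => [] [] /= h //; lia.
have h2 : val y.2 = val z.2 by case: y.1 z.1 h => [] [] /= h //; lia.
by rewrite (vt_eta y) (vt_eta z) h1 h2.
Qed.

Lemma uniq_rank (T : eqType) (r : T -> nat) (s : seq T) : sorted ltn (map r s) -> uniq s.
Proof.
move=> h; apply: (@map_uniq _ _ r); apply: (sorted_uniq ltn_trans) => //.
exact: ltnn.
Qed.

Lemma right_path u v : u \in VS -> v \in VS -> (Pn u < Pn v)%N ->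
  exists vs es, [/\ lpath E u vs es, last u vs = v & size es = dst u v].
Proof.
move=> hu hv huv.
have hln := l_le_n.
set k0 := val u.2; set k1 := val v.2.
set p := (k1 - k0 + v.1)%N.
have hu' := @VS_mem u hu; have hv' := @VS_mem v hv.
have hPu : Pn u = (2 * k0 + u.1)%N by [].
have hPv : Pn v = (2 * k1 + v.1)%N by [].
have hb : (1 <= k0)%N /\ (1 <= p)%N /\ (k0 + p <= l)%N /\ (k0 <= k1)%N /\
          (2 * k1 + v.1 = 2 * (k0 + p) - v.1)%N.
  move: hu' hv' huv; rewrite hPu hPv -/k0 -/k1 /p.
  case: u.1 v.1 => [] [] /= hu' hv' huv;
  try (move: (inI_bound _ hu') => /andP[? ?]); try (move: (inI_bound _ hv') => /andP[? ?]);
  try (move: hu' => /andP[? ?]); try (move: hv' => /andP[? ?]); lia.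
case: hb => hk0 [hp [hkp [hk01 hPv']]].
pose fv i := if (i.+1 < p)%N then vv n (k0 + i.+1) else v.
exists (mkseq fv p), (mkseq (fun i => T_edge n a b (k0 + i)) p).
pose y i := nth u (u :: mkseq fv p) i.
have y0 : y 0%N = u by [].
have yS i : (i < p)%N -> y i.+1 = fv i by move=> hi; rewrite /y /= nth_mkseq.
have hu2 : u = if u.1 then ww n k0 else vv n k0 by rewrite {1}(vt_eta u).
have hv2 : v = if v.1 then ww n k1 else vv n k1 by rewrite {1}(vt_eta v).
have Pfv i : (i < p)%N -> Pn (fv i) = if (i.+1 < p)%N then (2 * (k0 + i.+1))%N else Pn v.
  by move=> hi; rewrite /fv; case: ifP => // h; rewrite Pn_vv //; lia.
have gy i : (i <= p)%N -> Pn (y i) =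
    if i == 0%N then Pn u else if (i < p)%N then (2 * (k0 + i))%N else Pn v.
  by case: i => [|i] hi //=; rewrite yS // Pfv.
have hne : u != v by apply/eqP => h; move: huv; rewrite h ltnn.
split.
- split.
  + by rewrite !size_mkseq.
  + apply: (@uniq_rank _ Pn); apply/(sortedP 0%N) => i; rewrite size_map /= size_mkseq => hi.
    have e1 j : (j <= p)%N -> nth 0%N (map Pn (u :: mkseq fv p)) j = Pn (y j).
      by move=> hj; rewrite (nth_map u) //= size_mkseq; lia.
    have e2 j : (j < p)%N -> nth 0%N (map Pn (mkseq fv p)) j = Pn (y j.+1).
      by move=> hj; rewrite (nth_map u) ?size_mkseq.
    rewrite ?e1 ?e2 ?gy; try lia.
    move: hPu hPv hPv' (leq_b1 u.1) (leq_b1 v.1).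
    by repeat case: ifP => ?; lia.
  + apply/andP; split.
      rewrite map_inj_in_uniq ?iota_uniq // => i j; rewrite !mem_iota => hi hj he.
      have h1 : vv n (k0 + i) \in T_edge n a b (k0 + j) by rewrite -he vv_in_edge.
      have h2 : vv n (k0 + i).+1 \in T_edge n a b (k0 + j) by rewrite -he vvS_in_edge.
      have := edge_Pn (k0 + j) _ _ h1; have := edge_Pn (k0 + j) _ _ h2.
      rewrite !Pn_vv; lia.
    apply/allP => e /mapP [i]; rewrite mem_iota => hi ->.
    apply: map_f; rewrite mem_iota; lia.
  + move=> i; rewrite size_mkseq => hi.
    rewrite nth_mkseq //.
    case: i hi => [|i] hi.
      rewrite [nth _ _ 0%N]/= addn0; split.
        by rewrite {1}hu2; case: ifP hu' => h hu'; [apply: ww_in_edge|apply: vv_in_edge].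
      rewrite -/(y 1%N) yS // /fv; case: ifP => h.
        by rewrite ?add0n ?addn0 addn1; apply: vvS_in_edge.
      rewrite hv2; case: ifP hv' hPv' => h' hv' hPv'.
        have e : k1 = k0 by lia.
        by rewrite ?addn0 -e; apply: ww_in_edge; exact: hv'.
      have e : k1 = k0.+1 by lia.
      by rewrite ?addn0 e; apply: vvS_in_edge.
    rewrite -/(y i.+1) -/(y i.+2) !yS //; try lia.
    split.
      rewrite /fv ifT; last by lia.
      by rewrite addnS; apply: vv_in_edge.
    rewrite /fv; case: ifP => h.
      by rewrite addnS; apply: vvS_in_edge.
    rewrite hv2; case: ifP hv' hPv' => h' hv' hPv'.
      have e : k1 = (k0 + i.+1)%N by lia.
      by rewrite -e; apply: ww_in_edge; exact: hv'.
    have e : k1 = (k0 + i.+1).+1 by lia.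
    by rewrite e; apply: vvS_in_edge.
  + move=> i j hij; rewrite size_mkseq => hj.
    rewrite !nth_mkseq; try lia.
    rewrite disjoints_subset; apply/subsetP => y' h1; rewrite inE; apply/negP => h2.
    have := edge_Pn _ _ _ h1; have := edge_Pn _ _ _ h2; lia.
- rewrite (last_nth u) size_mkseq -/(y p).
  have -> : p = (p.-1).+1 by lia.
  by rewrite yS ?prednK //; try lia; rewrite /fv ifF //; lia.
- rewrite size_mkseq /dst ifF; last by apply/negbTE.
  rewrite /dn.
  have -> : ((Pn u - Pn v + (Pn v - Pn u) + u.1 + v.1) = p.*2)%N.
    rewrite hPu hPv; move: hPv'; case: (u.1); case: (v.1); rewrite -!muln2; lia.
  by rewrite doubleK.
Qed.

Lemma dst_sym u v : dst u v = dst v u.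
Proof.
rewrite /dst eq_sym; case: eqP => // _; congr (_./2); rewrite /dn.
have := leq_b1 u.1; have := leq_b1 v.1; lia.
Qed.

Lemma lpath_nil u : lpath E u [::] [::].
Proof. by split. Qed.

Lemma D_eq D : distance_matrix VS E D ->
  forall u v, u \in VS -> v \in VS -> D u v = dst u v.
Proof.
move=> hD u v hu hv; have [[vs [es [hp hl hs]]] hmin] := hD u v hu hv.
apply/eqP; rewrite eqn_leq; apply/andP; split.
- case: (eqVneq u v) => [e|huv].
    subst v; by have := hmin [::] [::] (lpath_nil u) e; rewrite /dst -e eqxx.
  case: (ltngtP (Pn u) (Pn v)) => h.
  + have [vs' [es' [h1 h2 h3]]] := right_path _ _ hu hv h; rewrite -h3; exact: hmin h1 h2.
  + have [vs' [es' [h1 h2 h3]]] := right_path _ _ hv hu h.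
    have [h4 h5] := lpath_rev _ _ _ _ _ h1; rewrite h2 in h4 h5.
    by have := hmin _ _ h4 h5; rewrite size_rev h3 dst_sym.
  + by move/Pn_inj: h huv => ->; rewrite eqxx.
- rewrite -hs -hl /dst; case: eqP => // /eqP hne.
  have := lpath_lb _ _ _ hp hne => h.
  rewrite -[size es]doubleK; apply: half_leq; rewrite -muln2; lia.
Qed.
End Dist.


Lemma sum_restrict (R : realType) (G : nat -> R) lo hi N : (lo <= hi <= N)%N ->
  \sum_(0 <= k < N) (if (lo <= k < hi)%N then G k else 0) = \sum_(lo <= k < hi) G k.
Proof.
move=> /andP[h1 h2].
rewrite (big_cat_nat (n:=lo)) //=; last by lia.
rewrite (big_cat_nat (n:=hi) h1) //=.
rewrite big1_seq ?add0r; last by move=> k; rewrite mem_index_iota => /andP[_ /andP[? ?]]; rewrite ifF //; apply/negbTE/negP => /andP[? ?]; lia.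
rewrite [X in _ + X]big1_seq ?addr0; last by move=> k; rewrite mem_index_iota => /andP[_ /andP[? ?]]; rewrite ifF //; apply/negbTE/negP => /andP[? ?]; lia.
by apply: eq_big_nat => k hk; rewrite hk.
Qed.

Section SumH.
Variables (R : realType) (F : nat -> R) (lo hi : nat).
Lemma sumD (f g : nat -> nat) : \sum_(lo <= j < hi) (f j + g j)%:R * F j =
  \sum_(lo <= j < hi) (f j)%:R * F j + \sum_(lo <= j < hi) (g j)%:R * F j.
Proof. by rewrite -big_split; apply: eq_bigr => j _; rewrite natrD mulrDl. Qed.
Lemma sumM (c : nat) (f : nat -> nat) : \sum_(lo <= j < hi) (c * f j)%:R * F j =
  c%:R * \sum_(lo <= j < hi) (f j)%:R * F j.
Proof. by rewrite mulr_sumr; apply: eq_bigr => j _; rewrite natrM mulrA. Qed.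
Lemma sum1 : \sum_(lo <= j < hi) (1%N)%:R * F j = \sum_(lo <= j < hi) F j.
Proof. by apply: eq_bigr => j _; rewrite mul1r. Qed.
Lemma sum_ext (f g : nat -> nat) : (forall j, (lo <= j < hi)%N -> f j = g j) ->
  \sum_(lo <= j < hi) (f j)%:R * F j = \sum_(lo <= j < hi) (g j)%:R * F j.
Proof. by move=> h; apply: eq_big_nat => j hj; rewrite h. Qed.
Lemma sum_pick k : (lo <= k < hi)%N -> \sum_(lo <= j < hi) (j == k : nat)%:R * F j = F k.
Proof.
move=> /andP[h1 h2].
rewrite (big_cat_nat (n:=k)) //=; last by lia.
rewrite [X in _ + X]big_ltn // eqxx mul1r.
rewrite big1_seq ?add0r; last first.
  move=> j; rewrite mem_index_iota => /andP[_ /andP[? ?]].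
  have -> : (j == k) = false by apply/eqP; lia.
  by rewrite mul0r.
rewrite big1_seq ?addr0 //.
move=> j; rewrite mem_index_iota => /andP[_ /andP[? ?]].
have -> : (j == k) = false by apply/eqP; lia.
by rewrite mul0r.
Qed.
End SumH.

Section Eig.
Variables (R : realType) (n a b : nat).
Hypothesis Hab : (a + 2 <= b)%N.
Hypothesis Hbl : (2 * b < ell n a b)%N.
Local Notation l := (ell n a b).
Local Notation VS := (T_vertices n a b).
Local Notation E := (T_edges n a b).

Lemma sumVS (F : Vt n -> R) : \sum_(y in VS) F y =
  \sum_(1 <= j < l.+1) F (vv n j) + \sum_(1 <= j < l) (if inI n a b j then F (ww n j) else 0).
Proof.
rewrite big_mkcond /=.
have -> : \sum_(y : Vt n) (if y \in VS then F y else 0) =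
    \sum_(i : bool) \sum_(j : 'I_n.+1) (if (i, j) \in VS then F (i, j) else 0).
  by rewrite pair_big; apply: eq_bigr => -[i j].
rewrite big_bool /= addrC.
have hln := l_le_n n a b Hab Hbl.
congr (_ + _).
  rewrite -(@sum_restrict R (fun j => F (vv n j)) 1 l.+1 n.+1); last by apply/andP; split; lia.
  rewrite big_mkord; apply: eq_bigr => j _.
  by rewrite inE /= /vv inord_val orbF ltnS.
have hs := @sum_restrict R (fun j => if inI n a b j then F (ww n j) else 0) 1 l n.+1.
rewrite /= in hs; rewrite -hs; last by apply/andP; split; lia.
rewrite big_mkord; apply: eq_bigr => j _.
rewrite inE /= /ww inord_val.
case: ifP => h; case: ifP => h' //.
by move: (inI_bound n a b Hab Hbl _ h) => /andP[? ?]; move: h'; lia.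
Qed.

Definition dvw (i j : nat) : nat := if (i <= j)%N then (j.+1 - i)%N else (i - j)%N.
Definition dww (i j : nat) : nat := if i == j then 0%N else (dn i j).+1.

Lemma vv_in_VS j : (1 <= j <= l)%N -> vv n j \in VS.
Proof.
move=> hj; have hln := l_le_n n a b Hab Hbl.
by rewrite inE /= inordK ?hj //; lia.
Qed.
Lemma ww_in_VS j : inI n a b j -> ww n j \in VS.
Proof.
move=> hj; have hln := l_le_n n a b Hab Hbl.
have /andP[? ?] := inI_bound n a b Hab Hbl _ hj.
by rewrite inE /= inordK ?hj //; lia.
Qed.

Lemma dst_vv i j : (i <= n)%N -> (j <= n)%N -> dst n (vv n i) (vv n j) = dn i j.
Proof.
move=> hi hj; rewrite /dst !Pn_vv //=.
case: eqP => [e|ne].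
  have := congr1 (@Pn n) e; rewrite !Pn_vv // /dn; lia.
rewrite !addn0 -(doubleK (dn i j)); congr (_./2); rewrite /dn -!muln2; lia.
Qed.

Lemma dst_vw i j : (i <= n)%N -> (j <= n)%N -> dst n (vv n i) (ww n j) = dvw i j.
Proof.
move=> hi hj; rewrite /dst.
have -> : (vv n i == ww n j) = false by [].
rewrite Pn_vv // Pn_ww //=.
rewrite -(doubleK (dvw i j)); congr (_./2); rewrite /dn /dvw -!muln2; case: ifP; lia.
Qed.

Lemma dst_ww i j : (i <= n)%N -> (j <= n)%N -> dst n (ww n i) (ww n j) = dww i j.
Proof.
move=> hi hj; rewrite /dst !Pn_ww //= /dww.
case: eqP => [e|ne].
  have := congr1 (@Pn n) e; rewrite !Pn_ww // => h; rewrite ifT //; apply/eqP; lia.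
rewrite ifF; last first.
  by apply/negbTE/eqP => e; apply: ne; rewrite e.
rewrite -(doubleK (dn i j).+1); congr (_./2); rewrite /dn -!muln2; lia.
Qed.

Variables (x : Vt n -> R) (rho : R) (D : Vt n -> Vt n -> nat).
Hypothesis hD : distance_matrix VS E D.
Hypothesis heig : forall u, u \in VS -> \sum_(w in VS) (D u w)%:R * x w = rho * x u.

Definition U j := x (vv n j).
Definition W j := if inI n a b j then x (ww n j) else 0.

Lemma eig_v k : (1 <= k <= l)%N -> rho * U k =
  \sum_(1 <= j < l.+1) (dn k j)%:R * U j + \sum_(1 <= j < l) (dvw k j)%:R * W j.
Proof.
move=> hk; have hln := l_le_n n a b Hab Hbl.
rewrite /U -heig ?vv_in_VS // sumVS; congr (_ + _).
  apply: eq_big_nat => j hj.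
  by rewrite (D_eq n a b Hab Hbl D hD) ?vv_in_VS ?dst_vv //; lia.
apply: eq_big_nat => j hj; rewrite /W; case: ifP => h; last by rewrite mulr0.
by rewrite (D_eq n a b Hab Hbl D hD) ?vv_in_VS ?ww_in_VS ?dst_vw //; lia.
Qed.

Lemma eig_w k : inI n a b k -> rho * W k =
  \sum_(1 <= j < l.+1) (dvw j k)%:R * U j + \sum_(1 <= j < l) (dww k j)%:R * W j.
Proof.
move=> hk; have hln := l_le_n n a b Hab Hbl.
have /andP[? ?] := inI_bound n a b Hab Hbl _ hk.
rewrite /W hk -heig ?ww_in_VS // sumVS; congr (_ + _).
  apply: eq_big_nat => j hj.
  by rewrite (D_eq n a b Hab Hbl D hD) ?vv_in_VS ?ww_in_VS // (dst_sym n a b Hab Hbl) dst_vw //; lia.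
apply: eq_big_nat => j hj; case: ifP => h; last by rewrite mulr0.
by rewrite (D_eq n a b Hab Hbl D hD) ?ww_in_VS ?dst_ww //; lia.
Qed.

Local Notation SU := (\sum_(1 <= j < l.+1) U j).
Local Notation SW := (\sum_(1 <= j < l) W j).

Lemma ODE k : (2 <= k < l)%N ->
  rho * (U k.+1 + U k.-1) = 2 * rho * U k + 2 * U k + W k.-1 + W k.
Proof.
move=> hk.
have e1 := eig_v k.+1 ltac:(lia); have e2 := eig_v k.-1 ltac:(lia); have e3 := eig_v k ltac:(lia).
have s1 : \sum_(1 <= j < l.+1) (dn k.+1 j)%:R * U j + \sum_(1 <= j < l.+1) (dn k.-1 j)%:R * U j
   = 2 * \sum_(1 <= j < l.+1) (dn k j)%:R * U j + 2 * U k.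
  rewrite -sumD (sum_ext _ _ _ _ _ (fun j => 2 * dn k j + 2 * (j == k))%N); last first.
    by move=> j hj; case: eqP => [->|ne]; rewrite /dn /=; lia.
  by rewrite /= sumD !sumM sum_pick //; lia.
have s2 : \sum_(1 <= j < l) (dvw k.+1 j)%:R * W j + \sum_(1 <= j < l) (dvw k.-1 j)%:R * W j
   = 2 * \sum_(1 <= j < l) (dvw k j)%:R * W j + W k.-1 + W k.
  rewrite -sumD (sum_ext _ _ _ _ _ (fun j => 2 * dvw k j + (j == k.-1) + (j == k))%N); last first.
    move=> j hj; rewrite /dvw; case: eqP => [->|ne]; case: eqP => [e|ne'];
      repeat case: ifP; lia.
  rewrite /= sumD sumD /= sumM /= !sum_pick; try lia.
  done.
rewrite -[2 * rho * U k]mulrA mulrDr e1 e2 e3; lra.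
Qed.

Lemma WEQ k : inI n a b k ->
  2 * rho * W k + 3 * W k = rho * (U k + U k.+1) + (SU + SW).
Proof.
move=> hk; have /andP[hk1 hk2] := inI_bound n a b Hab Hbl _ hk.
have e1 := eig_w k hk; have e2 := eig_v k ltac:(lia); have e3 := eig_v k.+1 ltac:(lia).
have s1 : 2 * \sum_(1 <= j < l.+1) (dvw j k)%:R * U j =
    \sum_(1 <= j < l.+1) (dn k j)%:R * U j + \sum_(1 <= j < l.+1) (dn k.+1 j)%:R * U j + SU.
  rewrite -sumM -sumD -sum1 -sumD; apply: sum_ext => j hj.
  rewrite /dvw /dn; case: ifP; lia.
have s2 : 2 * \sum_(1 <= j < l) (dww k j)%:R * W j + 3 * W k =
    \sum_(1 <= j < l) (dvw k j)%:R * W j + \sum_(1 <= j < l) (dvw k.+1 j)%:R * W j + SW.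
  rewrite -(@sum_pick R W 1 l k); last by lia.
  rewrite -sumM -sumM -sumD -sum1 -!sumD; apply: sum_ext => j hj.
  rewrite /dvw /dww /dn; case: eqP => [->|ne]; repeat case: ifP; lia.
rewrite -[2 * rho * W k]mulrA mulrDr e1 e2 e3; lra.
Qed.

Lemma BL : rho * (U 2 - U 1) = 2 * U 1 + W 1 - (SU + SW).
Proof.
have hl2 : (3 <= l)%N by lia.
have e1 := eig_v 2 ltac:(lia); have e2 := eig_v 1 ltac:(lia).
have s1 : \sum_(1 <= j < l.+1) (dn 2 j)%:R * U j + SU =
    \sum_(1 <= j < l.+1) (dn 1 j)%:R * U j + 2 * U 1.
  rewrite -sum1 -sumD -(@sum_pick R U 1 l.+1 1); last by lia.
  rewrite -sumM -sumD; apply: sum_ext => j hj.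
  rewrite /dn; case: eqP => [->|ne] /=; lia.
have s2 : \sum_(1 <= j < l) (dvw 2 j)%:R * W j + SW =
    \sum_(1 <= j < l) (dvw 1 j)%:R * W j + W 1.
  rewrite -sum1 -sumD -(@sum_pick R W 1 l 1); last by lia.
  rewrite -sumD; apply: sum_ext => j hj.
  rewrite /dvw; case: eqP => [->|ne] /=; repeat case: ifP; lia.
rewrite mulrBr e1 e2; lra.
Qed.

Lemma BR : rho * (U l.-1 - U l) = 2 * U l + W l.-1 - (SU + SW).
Proof.
have hl2 : (3 <= l)%N by lia.
have e1 := eig_v l.-1 ltac:(lia); have e2 := eig_v l ltac:(lia).
have s1 : \sum_(1 <= j < l.+1) (dn l.-1 j)%:R * U j + SU =
    \sum_(1 <= j < l.+1) (dn l j)%:R * U j + 2 * U l.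
  rewrite -sum1 -sumD -(@sum_pick R U 1 l.+1 l); last by lia.
  rewrite -sumM -sumD; apply: sum_ext => j hj.
  rewrite /dn; case: eqP => [->|ne] /=; lia.
have s2 : \sum_(1 <= j < l) (dvw l.-1 j)%:R * W j + SW =
    \sum_(1 <= j < l) (dvw l j)%:R * W j + W l.-1.
  rewrite -sum1 -sumD -(@sum_pick R W 1 l l.-1); last by lia.
  rewrite -sumD; apply: sum_ext => j hj.
  rewrite /dvw; case: eqP => [->|ne] /=; repeat case: ifP; lia.
rewrite mulrBr e1 e2; lra.
Qed.
End Eig.


Lemma argmin_nat (R : realType) (F : nat -> R) lo hi : (lo <= hi)%N ->
  exists2 j, (lo <= j <= hi)%N & forall k, (lo <= k <= hi)%N -> F j <= F k.
Proof.
move=> h; elim: hi h => [|hi IH] h.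
  by exists lo => [|k hk]; [lia|have -> : k = lo by lia].
case: (ltngtP lo hi.+1) => h'; last first.
- by exists lo => [|k hk]; [lia|have -> : k = lo by lia].
- lia.
have [j hj hm] := IH ltac:(lia).
case: (lerP (F j) (F hi.+1)) => hle.
  exists j => [|k hk]; first lia.
  case: (ltnP k hi.+1) => hk'; first by apply: hm; lia.
  by have -> : k = hi.+1 by lia.
exists hi.+1 => [|k hk]; first lia.
case: (ltnP k hi.+1) => hk'.
  by apply: (le_trans (ltW hle)); apply: hm; lia.
by have -> : k = hi.+1 by lia.
Qed.

Lemma sum_refl (R : realType) (F : nat -> R) lo hi :
  2 * \sum_(lo <= j < hi) F j = \sum_(lo <= j < hi) (F j + F (lo + hi - j.+1)%N).
Proof.
have -> : 2 * \sum_(lo <= j < hi) F j = \sum_(lo <= j < hi) F j + \sum_(lo <= j < hi) F j by lra.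
by rewrite [X in _ + X]big_nat_rev big_split.
Qed.

Lemma sum_ge0_nat (R : realType) (F : nat -> R) lo hi :
  (forall j, (lo <= j < hi)%N -> 0 <= F j) -> 0 <= \sum_(lo <= j < hi) F j.
Proof.
move=> h; rewrite big_seq_cond; apply: sumr_ge0 => j /andP[hj _].
by apply: h; rewrite mem_index_iota in hj.
Qed.

Section Anal.
Variables (R : realType) (n a b : nat).
Hypothesis Hab : (a + 2 <= b)%N.
Hypothesis Hbl : (2 * b < ell n a b)%N.
Local Notation l := (ell n a b).
Local Notation inI := (inI n a b).
Variables (U W : nat -> R) (rho S : R).
Hypothesis hrho : 0 < rho.
Hypothesis hU : forall j, (1 <= j <= l)%N -> 0 < U j.
Hypothesis hW : forall j, inI j -> 0 < W j.
Hypothesis hW0 : forall j, ~~ inI j -> W j = 0.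
Hypothesis ODE : forall k, (2 <= k < l)%N ->
  rho * (U k.+1 + U k.-1) = 2 * rho * U k + 2 * U k + W k.-1 + W k.
Hypothesis WEQ : forall k, inI k -> 2 * rho * W k + 3 * W k = rho * (U k + U k.+1) + S.
Hypothesis BL : rho * (U 2 - U 1) = 2 * U 1 + W 1 - S.
Hypothesis BR : rho * (U l.-1 - U l) = 2 * U l + W l.-1 - S.

Definition A j := U j - U (l.+1 - j).
Definition B e := W e - W (l - e).
Local Notation m := (l./2).

Lemma inI_lo e : (1 <= e <= a)%N -> inI e.
Proof. by move=> h; rewrite /Defs.inI h. Qed.
Lemma inI_hi e : (l - b <= e < l)%N -> inI e.
Proof. move=> h; rewrite /Defs.inI; apply/orP; right; apply/andP; split; lia. Qed.
Lemma inI_mid e : (a < e < l - b)%N -> ~~ inI e.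
Proof. move=> h; rewrite /Defs.inI negb_or; apply/andP; split; apply/negP => /andP[? ?]; lia. Qed.

Lemma A_rec j : (2 <= j <= m)%N ->
  rho * (A j.+1 + A j.-1) = 2 * rho * A j + 2 * A j + B j.-1 + B j.
Proof.
move=> hj.
have o1 := ODE j ltac:(lia); have o2 := ODE (l.+1 - j) ltac:(lia).
set k := (l.+1 - j)%N in o2.
have e1 : A j.+1 = U j.+1 - U k.-1 by rewrite /A; congr (_ - U _); rewrite /k; lia.
have e2 : A j.-1 = U j.-1 - U k.+1 by rewrite /A; congr (_ - U _); rewrite /k; lia.
have e3 : B j.-1 = W j.-1 - W k by rewrite /B; congr (_ - W _); rewrite /k; lia.
have e4 : B j = W j - W k.-1 by rewrite /B; congr (_ - W _); rewrite /k; lia.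
rewrite e1 e2 e3 e4 /A -/k; lra.
Qed.

Lemma A_bnd : rho * (A 2 - A 1) = 2 * A 1 + B 1.
Proof.
rewrite /A /B.
have -> : (l.+1 - 2)%N = l.-1 by lia.
have -> : (l.+1 - 1)%N = l by lia.
have -> : (l - 1)%N = l.-1 by lia.
move: BL BR; rewrite !mulrBr => h1 h2. lra.
Qed.

Lemma l_ge3 : (3 <= l)%N.
Proof. lia. Qed.

Lemma B_lo e : (1 <= e <= a)%N -> (2 * rho + 3) * B e = rho * (A e + A e.+1).
Proof.
move=> he.
have w1 := WEQ e (inI_lo _ he).
have w2 := WEQ (l - e) (inI_hi (l - e) ltac:(lia)).
have e1 : (l - e).+1 = (l.+1 - e)%N by lia.
have e2 : (l.+1 - e.+1)%N = (l - e)%N by lia.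
rewrite e1 in w2; rewrite /A /B e2.
move: w1 w2; rewrite !mulrDl !mulrDr => w1 w2; lra.
Qed.

Lemma B_mid e : (a < e <= b)%N -> B e = - W (l - e).
Proof. move=> he; rewrite /B hW0 ?sub0r //; apply: inI_mid; lia. Qed.

Lemma B_hi e : (b < e)%N -> (2 * e <= l)%N -> B e = 0.
Proof. move=> h1 h2; rewrite /B !hW0 ?subrr //; apply: inI_mid; lia. Qed.

Lemma B_bound e : (1 <= e)%N -> (2 * e <= l)%N ->
  (2 * rho + 3) * B e = rho * (A e + A e.+1) \/ B e <= 0.
Proof.
move=> h1 h2; case: (leqP e a) => h3; first by left; apply: B_lo; lia.
right; case: (leqP e b) => h4.
  rewrite B_mid; last by lia.
  rewrite oppr_le0; apply: ltW; apply: hW; apply: inI_hi; lia.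
by rewrite B_hi.
Qed.

Lemma B_a1 : B a.+1 < 0.
Proof. rewrite B_mid; last by lia. rewrite oppr_lt0; apply: hW; apply: inI_hi; lia. Qed.

Lemma A_mid1 : A m.+1 = 0 \/ A m.+1 = - A m.
Proof.
have hd := odd_double_half l; rewrite -muln2 in hd.
rewrite /A; case: (boolP (odd l)) => ho; [rewrite ho /= in hd|rewrite (negbTE ho) /= in hd].
  left; have -> : (l.+1 - m.+1)%N = m.+1 by lia.
  by rewrite subrr.
right; have -> : (l.+1 - m.+1)%N = m by lia.
have -> : (l.+1 - m)%N = m.+1 by lia.
by rewrite opprB.
Qed.

Lemma m_facts : (2 * m <= l)%N /\ (l <= 2 * m + 1)%N.
Proof.
have hd := odd_double_half l; rewrite -muln2 in hd.
by move: hd; case: (odd l) => /= hd; split; lia.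
Qed.

Lemma Bq (Bv Q : R) : (2 * rho + 3) * Bv <= Q -> 0 <= Q -> Bv <= Q.
Proof. move=> h1 h2; have hr := hrho; nra. Qed.

Lemma A_pos i : (1 <= i <= m)%N -> 0 < A i.
Proof.
have [hm1 hm2] := m_facts.
have hr := hrho.
have hbm : (b <= m)%N by lia.
have [jm hjm hmin] := @argmin_nat R A 1 m ltac:(lia).
set mu := A jm.
suff : 0 < mu by move=> h hj; apply: (lt_le_trans h); apply: hmin.
rewrite ltNge; apply/negP => hmu.
have hup j : (1 <= j <= m)%N -> A j = mu -> mu <= A j.+1.
  move=> hj hA; case: (ltnP j m) => h; first by apply: hmin; lia.
  have ej : j = m by lia.
  rewrite ej in hA *; case: A_mid1 => ->; rewrite ?hA; lra.
have key j : (1 <= j <= m)%N -> A j = mu ->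
    [/\ mu = 0, A j.+1 = mu, (2 <= j)%N -> A j.-1 = mu & B j = 0].
  move=> hj hA; have b1 := hup j hj hA.
  case: (ltnP 1 j) => hj2.
  - have r := A_rec j ltac:(lia).
    have b0 : mu <= A j.-1 by apply: hmin; lia.
    have bb1 : (2 * rho + 3) * B j.-1 <= rho * (A j.-1 - mu).
      case: (B_bound j.-1 ltac:(lia) ltac:(lia)) => h.
        rewrite h; have -> : j.-1.+1 = j by lia.
        rewrite hA; nra.
      nra.
    have bb2 : (2 * rho + 3) * B j <= rho * (A j.+1 - mu).
      case: (B_bound j ltac:(lia) ltac:(lia)) => h.
        by rewrite h hA; nra.
      nra.
    have p1 : 0 <= rho * (A j.-1 - mu) by nra.
    have p2 : 0 <= rho * (A j.+1 - mu) by nra.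
    have c1 := Bq _ _ bb1 p1; have c2 := Bq _ _ bb2 p2.
    rewrite hA in r.
    have hmu0 : mu = 0 by nra.
    rewrite hmu0 in bb1 bb2 r p1 p2 *.
    have hP : rho * (A j.-1 - 0) + rho * (A j.+1 - 0) = 0 by nra.
    have hA1 : A j.-1 = 0 by nra.
    have hA2 : A j.+1 = 0 by nra.
    split => //.
    rewrite hA1 hA2 in bb1 bb2 r; nra.
  - have ej : j = 1%N by lia.
    rewrite ej in hA b1 *; have r := A_bnd.
    have bb1 : (2 * rho + 3) * B 1 <= rho * (A 2 - mu).
      case: (B_bound 1 ltac:(lia) ltac:(lia)) => h.
        by rewrite h hA; nra.
      nra.
    have p1 : 0 <= rho * (A 2 - mu) by nra.
    have c1 := Bq _ _ bb1 p1.
    rewrite hA in r.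
    have hmu0 : mu = 0 by nra.
    rewrite hmu0 in bb1 r p1 *.
    have hA2 : A 2 = 0 by nra.
    split => //.
    rewrite hA2 in bb1 r; nra.
have [mu0 _ _ _] := key jm hjm erefl.
have up t : (jm + t <= m)%N -> A (jm + t) = mu.
  elim: t => [|t IH] ht; first by rewrite addn0.
  have [_ h _ _] := key (jm + t)%N ltac:(lia) (IH ltac:(lia)).
  by rewrite addnS.
have down t : (t < jm)%N -> A (jm - t) = mu.
  elim: t => [|t IH] ht; first by rewrite subn0.
  have [_ _ h _] := key (jm - t)%N ltac:(lia) (IH ltac:(lia)).
  have -> : (jm - t.+1)%N = (jm - t).-1 by lia.
  by apply: h; lia.
have hall k : (1 <= k <= m)%N -> A k = mu.
  move=> hk; case: (leqP jm k) => h.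
    have -> : k = (jm + (k - jm))%N by lia.
    by apply: up; lia.
  have -> : k = (jm - (jm - k))%N by lia.
  by apply: down; lia.
have [_ _ _ hB] := key a.+1 ltac:(lia) (hall a.+1 ltac:(lia)).
by have := B_a1; rewrite hB ltxx.
Qed.

Lemma W_ge0 j : 0 <= W j.
Proof. by case: (boolP (inI j)) => h; [apply: ltW; apply: hW|rewrite hW0]. Qed.

Lemma B_pos e : (1 <= e <= a)%N -> 0 < B e.
Proof.
move=> he; have [hm1 hm2] := m_facts; have hr := hrho.
have h1 := A_pos e ltac:(lia); have h2 := A_pos e.+1 ltac:(lia).
have := B_lo e he; nra.
Qed.

Lemma A_incr i : (1 <= i <= a)%N -> A i < A i.+1.
Proof.
have [hm1 hm2] := m_facts; have hr := hrho.
elim: i => [|i IH] hi; first by lia.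
case: (posnP i) => [->|hi0].
  have r := A_bnd; have h1 := A_pos 1 ltac:(lia); have h2 := B_pos 1 ltac:(lia).
  nra.
have IH' := IH ltac:(lia).
have r := A_rec i.+1 ltac:(lia); rewrite /= in r.
have h1 := A_pos i.+1 ltac:(lia).
have h2 := B_pos i ltac:(lia); have h3 := B_pos i.+1 ltac:(lia).
nra.
Qed.

Lemma claim_i i : (1 <= i <= a)%N -> A i < A i.+1 /\ B i < A i.+1.
Proof.
move=> hi; have [hm1 hm2] := m_facts; have hr := hrho.
have h1 := A_incr i hi; split => //.
have h2 := A_pos i.+1 ltac:(lia); have h3 := A_pos i ltac:(lia).
have := B_lo i hi; nra.
Qed.

Lemma conv k : (2 <= k < l)%N -> U k - U k.-1 < U k.+1 - U k.
Proof.
move=> hk; have hr := hrho; have o := ODE k hk.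
have h1 := hU k ltac:(lia); have h2 := W_ge0 k.-1; have h3 := W_ge0 k.
nra.
Qed.

Lemma U_decr j : (1 <= j <= m)%N -> U j.+1 < U j.
Proof.
have [hm1 hm2] := m_facts.
have base : U m.+1 < U m.
  have hA := A_pos m ltac:(lia); move: hA; rewrite /A.
  have hd := odd_double_half l; rewrite -muln2 in hd.
  case: (boolP (odd l)) => ho; [rewrite ho /= in hd|rewrite (negbTE ho) /= in hd].
    have -> : (l.+1 - m)%N = m.+2 by lia.
    have c := conv m.+1 ltac:(lia); rewrite /= in c; lra.
  have -> : (l.+1 - m)%N = m.+1 by lia.
  lra.
move=> hj.
suff h t : (t <= m - 1)%N -> U (m - t).+1 < U (m - t).
  have := h (m - j)%N ltac:(lia); have -> : (m - (m - j))%N = j by lia.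
  by [].
elim: t => [|t IH] ht; first by rewrite subn0.
have IH' := IH ltac:(lia).
have c := conv (m - t)%N ltac:(lia).
have e1 : (m - t).-1 = (m - t.+1)%N by lia.
have e2 : (m - t)%N = (m - t.+1).+1 by lia.
rewrite e1 in c; rewrite e2 in IH' c; lra.
Qed.

Definition G i := U (a + 1 + i) - U (l - b + 1 - i).
Local Notation iin := ((l - b - a - 1)./2).

Lemma G_rec i : (2 <= i <= iin)%N -> rho * (G i.-1 + G i.+1) = 2 * rho * G i + 2 * G i.
Proof.
move=> hi.
have hd := odd_double_half (l - b - a - 1); rewrite -muln2 in hd.
have hq : (2 * iin <= l - b - a - 1)%N by move: hd; case: odd => /= hd; lia.
have o1 := ODE (a + 1 + i) ltac:(lia); have o2 := ODE (l - b + 1 - i) ltac:(lia).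
rewrite !hW0 in o1 o2; try (apply: inI_mid; lia).
have e1 : G i.-1 = U (a + 1 + i).-1 - U (l - b + 1 - i).+1.
  by rewrite /G; congr (U _ - U _); lia.
have e2 : G i.+1 = U (a + 1 + i).+1 - U (l - b + 1 - i).-1.
  by rewrite /G; congr (U _ - U _); lia.
rewrite e1 e2 /G; lra.
Qed.

Lemma G_in : 0 < G iin /\ G iin.+1 <= 0.
Proof.
have [hm1 hm2] := m_facts.
have hd := odd_double_half (l - b - a - 1); rewrite -muln2 in hd.
rewrite /G; case: (boolP (odd (l - b - a - 1))) => ho;
  [rewrite ho /= in hd|rewrite (negbTE ho) /= in hd].
- have e1 : (l - b + 1 - iin)%N = (a + 1 + iin).+2 by lia.
  have e2 : (l - b + 1 - iin.+1)%N = (a + 1 + iin).+1 by lia.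
  have e3 : (a + 1 + iin.+1)%N = (a + 1 + iin).+1 by lia.
  rewrite e1 e2 e3.
  have u1 := U_decr (a + 1 + iin) ltac:(lia).
  have u2 := U_decr (a + 1 + iin).+1 ltac:(lia).
  split; lra.
- have e1 : (l - b + 1 - iin)%N = (a + 1 + iin).+1 by lia.
  have e2 : (l - b + 1 - iin.+1)%N = (a + 1 + iin) by lia.
  have e3 : (a + 1 + iin.+1)%N = (a + 1 + iin).+1 by lia.
  rewrite e1 e2 e3.
  have u1 := U_decr (a + 1 + iin) ltac:(lia).
  split; lra.
Qed.

Lemma G_dec i : (1 <= i <= iin)%N -> 0 < G i /\ G i.+1 < G i.
Proof.
have hr := hrho; have [g1 g2] := G_in.
move=> hi.
suff h t : (t <= iin - 1)%N -> 0 < G (iin - t) /\ G (iin - t).+1 < G (iin - t).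
  have := h (iin - i)%N ltac:(lia); have -> : (iin - (iin - i))%N = i by lia.
  by [].
elim: t => [|t IH] ht; first by rewrite subn0; split; lra.
have [i1 i2] := IH ltac:(lia).
have r := G_rec (iin - t)%N ltac:(lia).
have e1 : (iin - t).-1 = (iin - t.+1)%N by lia.
have e2 : (iin - t)%N = (iin - t.+1).+1 by lia.
rewrite e1 in r; rewrite e2 in r i1 i2.
split; nra.
Qed.

Local Notation p := (l - b + 1)%N.
Local Notation q := (l - a)%N.
Local Notation k0 := ((p + q - 1)./2).
Definition Phi k := U k - U (p + q - k).

Lemma Phi_rec k : (p + 1 <= k <= k0)%N ->
  (2 * rho * rho + 2 * rho) * (Phi k.-1 + Phi k.+1) = (4 * rho * rho + 12 * rho + 6) * Phi k.
Proof.
move=> hk.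
have hd := odd_double_half (p + q - 1); rewrite -muln2 in hd.
have hk0 : (2 * k0 <= p + q - 1)%N by move: hd; case: odd => /= hd; lia.
set k' := (p + q - k)%N.
have o1 := ODE k ltac:(lia); have o2 := ODE k' ltac:(rewrite /k'; lia).
have w1 := WEQ k.-1 (inI_hi k.-1 ltac:(rewrite /k'; lia)); have w2 := WEQ k' (inI_hi k' ltac:(rewrite /k'; lia)).
have w3 := WEQ k (inI_hi k ltac:(rewrite /k'; lia)); have w4 := WEQ k'.-1 (inI_hi k'.-1 ltac:(rewrite /k'; lia)).
have e1 : Phi k.-1 = U k.-1 - U k'.+1 by rewrite /Phi; congr (_ - U _); rewrite /k'; lia.
have e2 : Phi k.+1 = U k.+1 - U k'.-1 by rewrite /Phi; congr (_ - U _); rewrite /k'; lia.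
have e3 : Phi k = U k - U k' by [].
have ek : k.-1.+1 = k by lia.
have ek' : k'.-1.+1 = k' by rewrite /k'; lia.
rewrite ek in w1; rewrite ek' in w4.
have o12 : rho * (Phi k.+1 + Phi k.-1) = (2 * rho + 2) * Phi k + (W k.-1 - W k') + (W k - W k'.-1).
  rewrite e1 e2 e3; move: o1 o2; rewrite ?mulrDr ?mulrDl ?mulrBr => o1 o2; lra.
have c1 : (2 * rho + 3) * (W k.-1 - W k') = rho * (Phi k.-1 + Phi k).
  rewrite e1 e3; move: w1 w2; rewrite ?mulrDr ?mulrDl ?mulrBr ?mulrBl => w1 w2; lra.
have c2 : (2 * rho + 3) * (W k - W k'.-1) = rho * (Phi k + Phi k.+1).
  rewrite e2 e3; move: w3 w4; rewrite ?mulrDr ?mulrDl ?mulrBr ?mulrBl => w3 w4; lra.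
move: o12 c1 c2; set P1 := Phi k.-1; set P2 := Phi k.+1; set P0 := Phi k.
set X1 := W k.-1 - W k'; set X2 := W k - W k'.-1.
move=> o12 c1 c2.
have o3 : (2 * rho + 3) * (rho * (P2 + P1)) =
    (2 * rho + 3) * (2 * rho + 2) * P0 + (2 * rho + 3) * X1 + (2 * rho + 3) * X2.
  by rewrite o12; ring.
rewrite c1 c2 in o3.
nra.
Qed.

Lemma Phi_mid1 : Phi k0.+1 = 0 \/ Phi k0.+1 = - Phi k0.
Proof.
have hd := odd_double_half (p + q - 1); rewrite -muln2 in hd.
rewrite /Phi; case: (boolP (odd (p + q - 1))) => ho;
  [rewrite ho /= in hd|rewrite (negbTE ho) /= in hd].
  left; have -> : (p + q - k0.+1)%N = k0.+1 by lia.
  by rewrite subrr.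
right; have -> : (p + q - k0.+1)%N = k0 by lia.
have -> : (p + q - k0)%N = k0.+1 by lia.
by rewrite opprB.
Qed.

Lemma k0_facts : (p <= k0)%N /\ (2 * k0 <= p + q - 1 <= 2 * k0 + 1)%N.
Proof.
have hd := odd_double_half (p + q - 1); rewrite -muln2 in hd.
by move: hd; case: odd => /= hd; split; lia.
Qed.

Lemma Phi_step k : (p + 1 <= k <= k0)%N ->
  (0 <= Phi k /\ Phi k.+1 <= Phi k -> 0 <= Phi k.-1 /\ Phi k <= Phi k.-1) /\
  (Phi k < 0 /\ Phi k < Phi k.+1 -> Phi k.-1 < 0 /\ Phi k.-1 < Phi k).
Proof.
move=> hk; have hr := hrho; have r := Phi_rec k hk.
have e : (2 * rho * rho + 2 * rho) * (Phi k.-1 - Phi k) =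
    (2 * rho * rho + 2 * rho) * (Phi k - Phi k.+1) + (8 * rho + 6) * Phi k.
  apply/eqP; rewrite -subr_eq0; apply/eqP.
  transitivity ((2 * rho * rho + 2 * rho) * (Phi k.-1 + Phi k.+1) -
    (4 * rho * rho + 12 * rho + 6) * Phi k); first by ring.
  by rewrite r subrr.
have hpos : 0 < 2 * rho * rho + 2 * rho by nra.
split => -[h1 h2].
  have : 0 <= (2 * rho * rho + 2 * rho) * (Phi k.-1 - Phi k) by rewrite e; nra.
  rewrite pmulr_rge0 // subr_ge0 => h3; split => //; lra.
have : (2 * rho * rho + 2 * rho) * (Phi k.-1 - Phi k) < 0 by rewrite e; nra.
rewrite pmulr_rlt0 // subr_lt0 => h3; split => //; lra.
Qed.

Lemma Phi_nonneg : 0 <= Phi k0 -> forall k, (p <= k)%N -> (2 * k <= p + q)%N -> 0 <= Phi k.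
Proof.
move=> h0 k hk1 hk2; have [hp1 /andP[hp2 hp3]] := k0_facts.
have base : 0 <= Phi k0 /\ Phi k0.+1 <= Phi k0.
  by split => //; case: Phi_mid1 => ->; lra.
case: (leqP k k0) => hk3; last first.
  have ek : k = k0.+1 by lia.
  have hd := odd_double_half (p + q - 1); rewrite -muln2 in hd.
  move: hd; case: odd => /= hd; last by exfalso; lia.
  rewrite /Phi; have -> : (p + q - k)%N = k by lia.
  by rewrite subrr.
suff H t : (t <= k0 - p)%N -> 0 <= Phi (k0 - t) /\ Phi (k0 - t).+1 <= Phi (k0 - t).
  have := H (k0 - k)%N ltac:(lia); have -> : (k0 - (k0 - k))%N = k by lia.
  by case.
elim: t => [|t IH] ht; first by rewrite subn0.
have [st _] := Phi_step (k0 - t) ltac:(lia).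
have [h1 h2] := st (IH ltac:(lia)).
have e1 : (k0 - t).-1 = (k0 - t.+1)%N by lia.
have e2 : (k0 - t.+1).+1 = (k0 - t)%N by lia.
by rewrite e1 in h1 h2; rewrite e2.
Qed.

Lemma Phi_neg : Phi k0 < 0 -> Phi p < 0.
Proof.
move=> h0; have [hp1 /andP[hp2 hp3]] := k0_facts.
have base : Phi k0 < 0 /\ Phi k0 < Phi k0.+1.
  by split => //; case: Phi_mid1 => ->; lra.
suff H t : (t <= k0 - p)%N -> Phi (k0 - t) < 0 /\ Phi (k0 - t) < Phi (k0 - t).+1.
  have := H (k0 - p)%N ltac:(lia); have -> : (k0 - (k0 - p))%N = p by lia.
  by case.
elim: t => [|t IH] ht; first by rewrite subn0.
have [_ st] := Phi_step (k0 - t) ltac:(lia).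
have [h1 h2] := st (IH ltac:(lia)).
have e1 : (k0 - t).-1 = (k0 - t.+1)%N by lia.
have e2 : (k0 - t.+1).+1 = (k0 - t)%N by lia.
by rewrite e1 in h1 h2; rewrite e2.
Qed.

Definition cv j : R := (dn q j)%:R - (dn p j)%:R.
Definition cw e : R := (dvw q e)%:R - (dvw p e)%:R.

Lemma cv_facts j : (1 <= j)%N -> (2 * j <= l.+1)%N ->
  0 <= cv j /\ 0 <= cv j + cv (l.+1 - j).
Proof.
move=> h1 h2; rewrite /cv; split.
  by rewrite subr_ge0 ler_nat /dn; lia.
have -> : (dn q j)%:R - (dn p j)%:R + ((dn q (l.+1 - j))%:R - (dn p (l.+1 - j))%:R) =
  (dn q j + dn q (l.+1 - j))%:R - (dn p j + dn p (l.+1 - j))%:R :> R by rewrite !natrD; ring.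
by rewrite subr_ge0 ler_nat /dn; lia.
Qed.

Lemma V_pair j : (1 <= j <= l)%N -> 0 <= cv j * U j + cv (l.+1 - j) * U (l.+1 - j).
Proof.
have [hm1 hm2] := m_facts.
have key i : (1 <= i)%N -> (2 * i <= l.+1)%N -> 0 <= cv i * U i + cv (l.+1 - i) * U (l.+1 - i).
  move=> h1 h2; have [c1 c2] := cv_facts i h1 h2.
  case: (eqVneq (2 * i)%N l.+1) => he.
    have -> : (l.+1 - i)%N = i by lia.
    have := hU i ltac:(lia); nra.
  have hA := A_pos i ltac:(lia); have hu := hU (l.+1 - i) ltac:(lia).
  have -> : cv i * U i + cv (l.+1 - i) * U (l.+1 - i) =
    cv i * A i + (cv i + cv (l.+1 - i)) * U (l.+1 - i) by rewrite /A; ring.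
  by apply: addr_ge0; apply: mulr_ge0 => //; apply: ltW.
move=> hj; case: (leqP (2 * j) l.+1) => h; first by apply: key; lia.
have := key (l.+1 - j)%N ltac:(lia) ltac:(lia).
have -> : (l.+1 - (l.+1 - j))%N = j by lia.
by rewrite addrC.
Qed.

Lemma V_ge0 : 0 <= \sum_(1 <= j < l.+1) cv j * U j.
Proof.
suff : 0 <= 2 * \sum_(1 <= j < l.+1) cv j * U j by rewrite pmulr_rge0.
rewrite sum_refl; apply: sum_ge0_nat => j hj.
have -> : (1 + l.+1 - j.+1)%N = (l.+1 - j)%N by lia.
by apply: V_pair; lia.
Qed.

Definition WP e := if (e <= a)%N || (l - a <= e)%N then W e else 0.
Definition WU e := if (l - b <= e < l - a)%N then W e else 0.

Lemma W_split e : (1 <= e < l)%N -> W e = WP e + WU e.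
Proof.
move=> he; rewrite /WP /WU.
case: (leqP e a) => h1 /=.
  by rewrite ifF ?addr0 //; apply/negbTE/negP => /andP[? ?]; lia.
case: (leqP (l - a) e) => h2 /=.
  by rewrite ifF ?addr0 //; apply/negbTE/negP => /andP[? ?]; lia.
rewrite add0r; case: (leqP (l - b) e) => h3 /=; first by rewrite ?h2.
by rewrite hW0 //; apply: inI_mid; lia.
Qed.

Lemma WP_pair e : (1 <= e < l)%N -> 0 <= cw e * WP e + cw (l - e) * WP (l - e).
Proof.
have hr := hrho.
have key i : (1 <= i <= a)%N -> 0 <= cw i * WP i + cw (l - i) * WP (l - i).
  move=> hi; rewrite /WP ifT; last by rewrite (_ : (i <= a)%N = true) //; lia.
  rewrite ifT; last by apply/orP; right; lia.
  have hB := B_pos i hi; have hw := W_ge0 (l - i).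
  have c1 : 0 <= cw i by rewrite /cw subr_ge0 ler_nat /dvw; repeat case: ifP; lia.
  have c2 : 0 <= cw i + cw (l - i).
    rewrite /cw.
    have -> : (dvw q i)%:R - (dvw p i)%:R + ((dvw q (l - i))%:R - (dvw p (l - i))%:R) =
      (dvw q i + dvw q (l - i))%:R - (dvw p i + dvw p (l - i))%:R :> R by rewrite !natrD; ring.
    by rewrite subr_ge0 ler_nat /dvw; repeat case: ifP; lia.
  have -> : cw i * W i + cw (l - i) * W (l - i) = cw i * B i + (cw i + cw (l - i)) * W (l - i)
    by rewrite /B; ring.
  by apply: addr_ge0; apply: mulr_ge0 => //; apply: ltW.
move=> he; case: (leqP e a) => h1; first by apply: key; lia.
case: (leqP (l - a) e) => h2.
  have := key (l - e)%N ltac:(lia); have -> : (l - (l - e))%N = e by lia.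
  by rewrite addrC.
rewrite /WP !ifF ?mulr0 ?addr0 //; apply/negbTE/negP => /orP[]; lia.
Qed.

Lemma WP_ge0 : 0 <= \sum_(1 <= e < l) cw e * WP e.
Proof.
suff : 0 <= 2 * \sum_(1 <= e < l) cw e * WP e by rewrite pmulr_rge0.
rewrite sum_refl; apply: sum_ge0_nat => e he.
have -> : (1 + l - e.+1)%N = (l - e)%N by lia.
by apply: WP_pair; lia.
Qed.

Lemma WU_eq : \sum_(1 <= e < l) cw e * WU e = cw (l - b) * W (l - b) + \sum_(p <= e < q) cw e * W e.
Proof.
rewrite (big_cat_nat (n := (l - b)%N)) /=; try lia.
rewrite big1_seq ?add0r; last first.
  move=> e; rewrite mem_index_iota => /andP[_ /andP[? ?]].
  by rewrite /WU ifF ?mulr0 //; apply/negbTE/negP => /andP[? ?]; lia.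
rewrite (big_cat_nat (n := q)) /=; try lia.
rewrite [X in _ + X]big1_seq ?addr0; last first.
  move=> e; rewrite mem_index_iota => /andP[_ /andP[? ?]].
  by rewrite /WU ifF ?mulr0 //; apply/negbTE/negP => /andP[? ?]; lia.
rewrite big_ltn; last by lia.
rewrite /WU ifT; last by apply/andP; split; lia.
congr (_ + _); rewrite addn1.
by apply: eq_big_nat => e he; rewrite ifT //; apply/andP; split; lia.
Qed.

Lemma cw_lb : 0 < cw (l - b).
Proof. by rewrite /cw subr_gt0 ltr_nat /dvw; repeat case: ifP; lia. Qed.

Lemma pair_pq (hphi : forall k, (p <= k)%N -> (2 * k <= p + q)%N -> 0 <= Phi k) e :
  (p <= e < q)%N -> 0 <= cw e * W e + cw (p + q - e.+1) * W (p + q - e.+1).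
Proof.
have hr := hrho.
have key i : (p <= i)%N -> (2 * i <= p + q - 1)%N ->
    0 <= cw i * W i + cw (p + q - i.+1) * W (p + q - i.+1).
  move=> h1 h2; set i' := (p + q - i.+1)%N.
  case: (eqVneq (2 * i)%N (p + q - 1)%N) => he.
    have ei : i' = i by rewrite /i'; lia.
    have c0 : cw i = 0 by rewrite /cw; apply/eqP; rewrite subr_eq0 eqr_nat /dvw; apply/eqP; repeat case: ifP; lia.
    by rewrite ei c0 !mul0r addr0.
  have c1 : 0 <= cw i by rewrite /cw subr_ge0 ler_nat /dvw; repeat case: ifP; lia.
  have c2 : cw i' = - cw i.
    rewrite /cw; apply/eqP; rewrite -subr_eq0 opprB.
    have -> : (dvw q i')%:R - (dvw p i')%:R - ((dvw p i)%:R - (dvw q i)%:R) =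
      (dvw q i' + dvw q i)%:R - (dvw p i' + dvw p i)%:R :> R by rewrite !natrD; ring.
    by rewrite subr_eq0 eqr_nat /i' /dvw; apply/eqP; repeat case: ifP; lia.
  have w1 := WEQ i (inI_hi i ltac:(lia)); have w2 := WEQ i' (inI_hi i' ltac:(rewrite /i'; lia)).
  have e1 : i'.+1 = (p + q - i)%N by rewrite /i'; lia.
  have p1 := hphi i h1 ltac:(lia); have p2 := hphi i.+1 ltac:(lia) ltac:(lia).
  rewrite e1 in w2; rewrite /Phi in p1 p2; rewrite -/i' in p2.
  have d : 0 <= W i - W i' by nra.
  rewrite c2; have -> : cw i * W i + - cw i * W i' = cw i * (W i - W i') by ring.
  exact: mulr_ge0.
move=> he; case: (leqP (2 * e) (p + q - 1)) => h; first by apply: key; lia.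
have := key (p + q - e.+1)%N ltac:(lia) ltac:(lia).
have -> : (p + q - (p + q - e.+1).+1)%N = e by lia.
by rewrite addrC.
Qed.

Lemma WU_ge0 (hphi : forall k, (p <= k)%N -> (2 * k <= p + q)%N -> 0 <= Phi k) :
  0 <= \sum_(p <= e < q) cw e * W e.
Proof.
suff : 0 <= 2 * \sum_(p <= e < q) cw e * W e by rewrite pmulr_rge0.
rewrite sum_refl; apply: sum_ge0_nat => e he.
exact: pair_pq.
Qed.

Hypothesis hIII : rho * (U q - U p) =
  \sum_(1 <= j < l.+1) cv j * U j + \sum_(1 <= e < l) cw e * W e.

Lemma claim_iii : U p < U q.
Proof.
have hr := hrho.
case: (ltrP (Phi k0) 0) => h.
  have := Phi_neg h; rewrite /Phi; have -> : (p + q - p)%N = q by lia.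
  by rewrite subr_lt0.
have hphi := Phi_nonneg h.
have sW : \sum_(1 <= e < l) cw e * W e =
    \sum_(1 <= e < l) cw e * WP e + \sum_(1 <= e < l) cw e * WU e.
  rewrite -big_split; apply: eq_big_nat => e he /=; rewrite W_split //; ring.
have h1 := V_ge0; have h2 := WP_ge0; have h3 := WU_ge0 hphi; have h4 := cw_lb.
have h5 : 0 < W (l - b) by apply: hW; apply: inI_hi; lia.
have h6 := hIII; rewrite sW WU_eq in h6.
have : 0 < rho * (U q - U p) by rewrite h6; nra.
by rewrite pmulr_rgt0 // subr_gt0.
Qed.
End Anal.


Theorem lemma3p3 (R : realType) (n a b : nat)
  (D : Vt n -> Vt n -> nat) (x : Vt n -> R) :
  (a + 2 <= b)%N ->
  (2 * (a + b) < n - 1)%N ->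
  (2 * b < ell n a b)%N ->
  distance_matrix (T_vertices n a b) (T_edges n a b) D ->
  distance_perron_vector (T_vertices n a b) D x ->
  let l := ell n a b in
  [/\ (1 <= a)%N ->
        (forall i, (1 <= i <= a)%N ->
           x (vv n i) - x (vv n (l + 1 - i)) < x (vv n i.+1) - x (vv n (l - i)) /\
           x (ww n i) - x (ww n (l - i)) < x (vv n i.+1) - x (vv n (l - i))),
      (forall i, (1 <= i <= (l - b - a - 1)./2 - 1)%N ->
           x (vv n (a + 2 + i)) - x (vv n (l - b - i)) <
             x (vv n (a + 1 + i)) - x (vv n (l - b + 1 - i)) /\
           0 < x (vv n (a + 2 + i)) - x (vv n (l - b - i)))
    & x (vv n (l - b + 1)) < x (vv n (l - a))].
Proof.
move=> Hab _ Hbl hD [rho [[_ heig] _ hpos _]] l.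
have hln := l_le_n n a b Hab Hbl.
set UU := U R n x; set WW := W R n a b x.
have hU j : (1 <= j <= ell n a b)%N -> 0 < UU j.
  by move=> hj; apply: hpos; apply: (vv_in_VS n a b Hab Hbl).
have hW j : inI n a b j -> 0 < WW j.
  by move=> hj; rewrite /WW /W hj; apply: hpos; apply: (ww_in_VS n a b Hab Hbl).
have hW0 j : ~~ inI n a b j -> WW j = 0 by move=> hj; rewrite /WW /W (negbTE hj).
have hW1 j : 0 <= WW j.
  by case: (boolP (inI n a b j)) => h; [apply: ltW; apply: hW|rewrite hW0].
have hODE := ODE R n a b Hab Hbl x rho D hD heig.
have hWEQ := WEQ R n a b Hab Hbl x rho D hD heig.
have hBL := BL R n a b Hab Hbl x rho D hD heig.
have hBR := BR R n a b Hab Hbl x rho D hD heig.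
have hrho : 0 < rho.
  have e := eig_v R n a b Hab Hbl x rho D hD heig 1 ltac:(lia).
  have s1 : UU 2 <= \sum_(1 <= j < (ell n a b).+1) (dn 1 j)%:R * U R n x j.
    rewrite -(@sum_pick R UU 1 (ell n a b).+1 2); last by lia.
    apply: ler_sum_nat => j hj; apply: ler_wpM2r; first by apply: ltW; apply: hU; lia.
    by rewrite ler_nat /dn; case: eqP => /= ?; lia.
  have s2 : 0 <= \sum_(1 <= j < ell n a b) (dvw 1 j)%:R * W R n a b x j.
    by apply: sum_ge0_nat => j hj; apply: mulr_ge0 => //; apply: hW1.
  have h1 := hU 1%N ltac:(lia); have h2 := hU 2%N ltac:(lia).
  rewrite -/UU -/WW in e s1 s2.
  nra.
have hIII : rho * (UU (l - a)%N - UU (l - b + 1)%N) =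
  \sum_(1 <= j < l.+1) cv R n a b j * UU j + \sum_(1 <= e < l) cw R n a b e * WW e.
  rewrite mulrBr /UU /WW (eig_v R n a b Hab Hbl x rho D hD heig (l - a)%N); last by rewrite /l; lia.
  rewrite (eig_v R n a b Hab Hbl x rho D hD heig (l - b + 1)%N); last by rewrite /l; lia.
  have e1 : \sum_(1 <= j < l.+1) cv R n a b j * U R n x j =
     \sum_(1 <= j < l.+1) (dn (l - a) j)%:R * U R n x j - \sum_(1 <= j < l.+1) (dn (l - b + 1) j)%:R * U R n x j.
    by rewrite -sumrB; apply: eq_bigr => j _; rewrite /cv mulrBl.
  have e2 : \sum_(1 <= e < l) cw R n a b e * W R n a b x e =
     \sum_(1 <= e < l) (dvw (l - a) e)%:R * W R n a b x e - \sum_(1 <= e < l) (dvw (l - b + 1) e)%:R * W R n a b x e.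
    by rewrite -sumrB; apply: eq_bigr => j _; rewrite /cw mulrBl.
  rewrite e1 e2; lra.
split.
- move=> ha i hi.
  have [c1 c2] := claim_i R n a b Hab Hbl UU WW rho _ hrho hW hW0 hODE hWEQ hBL hBR i hi.
  move: c1 c2; rewrite /A /B /UU /WW /W /U.
  rewrite ifT; last by apply: inI_lo.
  rewrite ifT; last by apply: (inI_hi R n a b Hab Hbl rho hrho); rewrite /l; lia.
  have -> : ((ell n a b).+1 - i.+1)%N = (l - i)%N by rewrite /l; lia.
  by rewrite /l addn1.
- move=> i hi.
  have [g1 g2] := G_dec R n a b Hab Hbl UU WW rho _ hrho hU hW hW0 hODE hWEQ hBL hBR i ltac:(rewrite /l in hi; lia).
  have [g3 _] := G_dec R n a b Hab Hbl UU WW rho _ hrho hU hW hW0 hODE hWEQ hBL hBR i.+1 ltac:(rewrite /l in hi; lia).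
  move: g2 g3; rewrite /G /UU /U.
  have -> : (a + 1 + i.+1)%N = (a + 2 + i)%N by lia.
  have -> : (ell n a b - b + 1 - i.+1)%N = (l - b - i)%N by rewrite /l; lia.
  by rewrite /l => g2 g3; split.
- by have := claim_iii R n a b Hab Hbl UU WW rho _ hrho hU hW hW0 hODE hWEQ hBL hBR hIII.
Qed.
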